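(* Let $T_0,T_1,A,B,C\subseteq\mathbb{N}$ with $T_0,T_1$ of total enumeration degree, $T_0<_e A$ and $T_1<_e A$. If $\{A,B\}$ is a nontrivial $\mathcal{K}_{T_0}$-pair and $\{A,C\}$ is a nontrivial $\mathcal{K}_{T_1}$-pair, then $T_0\equiv_e T_1$. In particular, $\{A,B\oplus C\}$ is a nontrivial $\mathcal{K}_{T_0}$-pair.
   Context: Enumeration reducibility: $A\le_e B$ if $A=\Gamma(B):=\{n:\exists D\subseteq B,\ \langle n,D\rangle\in\Gamma\}$ for some c.e. set $\Gamma$ of pairs $\langle n,D\rangle$ with $D$ finite; $A\equiv_e B$ iff $A\le_e B\le_e A$; $A<_e B$ iff $A\le_e B$ and $B\not\le_e A$. A set $T$ has total degree if $T\equiv_e X\oplus(\mathbb{N}\setminus X)$ for some $X$, where $X\oplus Y=\{2n:n\in X\}\cup\{2n+1:n\in Y\}$. $\mathcal{K}_U$-pair: $\{A,B\}$ is a $\mathcal{K}_U$-pair if there is $W\le_e U$ with $\{\langle a,b\rangle: a\in A, b\in B\}\subseteq W$ and $\{\langle a,b\rangle: a\notin A, b\notin B\}\cap W=\varnothing$; it is nontrivial if $A\not\le_e U$ and $B\not\le_e U$. *)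

(* Defs.v *)
From Stdlib Require Import Arith List.
Import ListNotations.

Inductive recf : Type :=
| RZero : recf
| RSucc : recf
| RProj : nat -> recf
| RComp : recf -> list recf -> recf
| RPrim : recf -> recf -> recf          (* primitive recursion on the first argument *)
| RMu   : recf -> recf.                 (* least y with f (y :: xs) = 0, all earlier defined *)

Inductive eval : recf -> list nat -> nat -> Prop :=
| ev_zero : forall xs, eval RZero xs 0
| ev_succ : forall x xs, eval RSucc (x :: xs) (S x)
| ev_proj : forall i xs, i < length xs -> eval (RProj i) xs (nth i xs 0)
| ev_comp : forall f gs xs ys y,
    evals gs xs ys -> eval f ys y -> eval (RComp f gs) xs y
| ev_prim0 : forall f g xs y, eval f xs y -> eval (RPrim f g) (0 :: xs) y
| ev_primS : forall f g n xs r y,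
    eval (RPrim f g) (n :: xs) r -> eval g (n :: r :: xs) y ->
    eval (RPrim f g) (S n :: xs) y
| ev_mu : forall f xs y,
    eval f (y :: xs) 0 ->
    (forall z, z < y -> exists v, eval f (z :: xs) (S v)) ->
    eval (RMu f) xs y
with evals : list recf -> list nat -> list nat -> Prop :=
| evs_nil : forall xs, evals [] xs []
| evs_cons : forall g gs xs y ys,
    eval g xs y -> evals gs xs ys -> evals (g :: gs) xs (y :: ys).

Definition ce (W : nat -> Prop) : Prop :=
  exists f : recf, forall n, W n <-> exists y, eval f [n] y.

Definition pair (a b : nat) : nat := (a + b) * (a + b + 1) / 2 + b.

(** Canonical index of finite sets: D_u = { i | bit i of u is 1 }. *)
Definition canfin (u i : nat) : Prop := Nat.testbit u i = true.

Definition enum_op (Gamma : nat -> Prop) (B : nat -> Prop) : nat -> Prop :=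
  fun n => exists u, Gamma (pair n u) /\ (forall i, canfin u i -> B i).

Definition ered (A B : nat -> Prop) : Prop :=
  exists Gamma, ce Gamma /\ forall n, A n <-> enum_op Gamma B n.

Definition eequiv (A B : nat -> Prop) : Prop := ered A B /\ ered B A.
Definition elt (A B : nat -> Prop) : Prop := ered A B /\ ~ ered B A.

Definition join (X Y : nat -> Prop) : nat -> Prop :=
  fun m => (exists n, m = 2 * n /\ X n) \/ (exists n, m = 2 * n + 1 /\ Y n).

Definition total_degree (T : nat -> Prop) : Prop :=
  exists X : nat -> Prop, eequiv T (join X (fun n => ~ X n)).

Definition KPair (U A B : nat -> Prop) : Prop :=
  exists W : nat -> Prop, ered W U /\
    (forall a b, A a -> B b -> W (pair a b)) /\
    (forall a b, ~ A a -> ~ B b -> ~ W (pair a b)).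

Definition nontrivial_KPair (U A B : nat -> Prop) : Prop :=
  KPair U A B /\ ~ ered A U /\ ~ ered B U.

(* Main.v *)
Require Import Defs.
From Stdlib Require Import Arith List Lia Classical.
Import ListNotations.

Definition prf (n : nat) (F : list nat -> nat) : Prop :=
  exists f, forall xs, length xs = n -> eval f xs (F xs).

Lemma prf_ext n F G : prf n F -> (forall xs, length xs = n -> F xs = G xs) -> prf n G.
Proof. intros [f Hf] E. exists f. intros xs L. rewrite <- E by exact L. auto. Qed.

Lemma P_var n i : prf n (fun xs => nth i xs 0).
Proof.
  destruct (Nat.lt_ge_cases i n) as [h|h].
  - exists (RProj i). intros xs L. constructor. lia.
  - exists RZero. intros xs L. rewrite nth_overflow by lia. constructor.
Qed.

Fixpoint cst (c : nat) : recf := match c with 0 => RZero | S c' => RComp RSucc [cst c'] end.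
Lemma eval_cst c xs : eval (cst c) xs c.
Proof. induction c; simpl. constructor. econstructor. econstructor. exact IHc. constructor. constructor. Qed.

Lemma P_cst n c : prf n (fun _ => c).
Proof. exists (cst c). intros; apply eval_cst. Qed.

Lemma P_comp m n F Gs : prf m F -> Forall (prf n) Gs -> length Gs = m ->
  prf n (fun xs => F (map (fun G => G xs) Gs)).
Proof.
  intros [f Hf] HG L.
  assert (exists gs, forall xs, length xs = n -> evals gs xs (map (fun G => G xs) Gs)) as [gs Hgs].
  { clear L Hf. induction HG as [|G Gs [g Hg] _ [gs IH]].
    - exists []. intros; constructor.
    - exists (g :: gs). intros xs L; simpl; constructor; auto. }
  exists (RComp f gs). intros xs Lx. econstructor. apply Hgs, Lx. apply Hf. rewrite length_map; auto.
Qed.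

Definition natrec (b : nat) (s : nat -> nat -> nat) (k : nat) : nat := nat_rect (fun _ => nat) b s k.

Lemma P_rec n F G : prf n F -> prf (S (S n)) G ->
  prf (S n) (fun l => natrec (F (tl l)) (fun m r => G (m :: r :: tl l)) (hd 0 l)).
Proof.
  intros [f Hf] [g Hg]. exists (RPrim f g). intros [|k xs] L; simpl in L; [discriminate|].
  injection L as L. simpl. induction k; simpl.
  - constructor. auto.
  - econstructor. exact IHk. apply Hg. simpl; lia.
Qed.

Lemma map_nth_seq : forall l pre, map (fun i => nth i (pre ++ l) 0) (seq (length pre) (length l)) = l.
Proof.
  induction l as [|x l IH]; intros pre; simpl; auto.
  f_equal.
  - rewrite app_nth2 by lia. rewrite Nat.sub_diag. reflexivity.
  - specialize (IH (pre ++ [x])). rewrite <- app_assoc in IH. simpl in IH.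
    rewrite length_app in IH. simpl in IH. rewrite Nat.add_comm in IH. exact IH.
Qed.

Lemma Forall_vars m k n : Forall (prf m) (map (fun i l => nth i l 0) (seq k n)).
Proof. apply Forall_forall. intros G HG. apply in_map_iff in HG. destruct HG as [i [<- _]]. apply P_var. Qed.

Lemma map_vars l k n : map (fun G : list nat -> nat => G l) (map (fun i l => nth i l 0) (seq k n))
   = map (fun i => nth i l 0) (seq k n).
Proof. rewrite map_map. reflexivity. Qed.

Lemma skipn_vars l k n : length l = k + n -> map (fun i => nth i l 0) (seq k n) = skipn k l.
Proof.
  intros L.
  assert (length (firstn k l) = k) as E1 by (rewrite length_firstn; lia).
  assert (length (skipn k l) = n) as E2 by (rewrite length_skipn; lia).
  pose proof (map_nth_seq (skipn k l) (firstn k l)) as M.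
  rewrite firstn_skipn, E1, E2 in M. exact M.
Qed.

Lemma P_shift n k C : prf n C -> prf (k + n) (fun l => C (skipn k l)).
Proof.
  intros H. eapply prf_ext. apply (P_comp n (k+n) C _ H (Forall_vars (k+n) k n)).
  rewrite length_map, length_seq; auto.
  intros xs L. simpl. rewrite map_vars, skipn_vars by lia. reflexivity.
Qed.

Lemma P_cons n H A : prf (S n) H -> prf n A -> prf n (fun xs => H (A xs :: xs)).
Proof.
  intros PH PA. eapply prf_ext.
  apply (P_comp (S n) n H (A :: map (fun i l => nth i l 0) (seq 0 n)) PH).
  constructor; auto. apply Forall_vars. simpl. rewrite length_map, length_seq; auto.
  intros xs L. simpl. rewrite map_vars, skipn_vars by lia. reflexivity.
Qed.

Lemma P_recL n K B G : prf n K -> prf n B -> prf (S (S n)) G ->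
  prf n (fun xs => natrec (B xs) (fun m r => G (m :: r :: xs)) (K xs)).
Proof.
  intros PK PB PG. eapply prf_ext. apply (P_cons n _ K (P_rec n B G PB PG) PK).
  intros; reflexivity.
Qed.

Lemma P_S n A : prf n A -> prf n (fun xs => S (A xs)).
Proof.
  intros PA. eapply prf_ext. apply (P_comp 1 n (fun l => S (hd 0 l)) [A]); auto.
  exists RSucc. intros [|x []] L; simpl in L; try discriminate. constructor.
  intros; reflexivity.
Qed.

Lemma P_drop2nd n G : prf (S n) G -> prf (S (S n)) (fun l => G (hd 0 l :: skipn 2 l)).
Proof.
  intros PG. eapply prf_ext.
  apply (P_comp (S n) (S (S n)) G ((fun l => nth 0 l 0) :: map (fun i l => nth i l 0) (seq 2 n)) PG).
  constructor. apply P_var. apply Forall_vars. simpl. rewrite length_map, length_seq; auto.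
  intros xs L. simpl. rewrite map_vars, skipn_vars by lia. destruct xs; reflexivity.
Qed.

Lemma P_add n A B : prf n A -> prf n B -> prf n (fun xs => A xs + B xs).
Proof.
  intros PA PB. eapply prf_ext. apply (P_recL n A B (fun l => S (nth 1 l 0))); auto.
  apply P_S, P_var.
  intros xs _. unfold natrec. induction (A xs); simpl; auto.
Qed.

Lemma P_pred n A : prf n A -> prf n (fun xs => pred (A xs)).
Proof.
  intros PA. eapply prf_ext. apply (P_recL n A (fun _ => 0) (fun l => nth 0 l 0)); auto.
  apply P_cst. apply P_var.
  intros xs _. unfold natrec. destruct (A xs); simpl; auto.
Qed.

Lemma P_sub n A B : prf n A -> prf n B -> prf n (fun xs => A xs - B xs).
Proof.
  intros PA PB. eapply prf_ext. apply (P_recL n B A (fun l => pred (nth 1 l 0))); auto.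
  apply P_pred, P_var.
  intros xs _. unfold natrec. induction (B xs); simpl in *; lia.
Qed.

Lemma P_mul n A B : prf n A -> prf n B -> prf n (fun xs => A xs * B xs).
Proof.
  intros PA PB. eapply prf_ext. apply (P_recL n A (fun _ => 0) (fun l => nth 1 l 0 + B (skipn 2 l))); auto.
  apply P_cst. apply P_add. apply P_var. apply (P_shift n 2 B PB).
  intros xs _. unfold natrec. induction (A xs); simpl in *; lia.
Qed.

Definition ifz (a b c : nat) := match a with 0 => b | S _ => c end.

Lemma P_ifz n A B C : prf n A -> prf n B -> prf n C -> prf n (fun xs => ifz (A xs) (B xs) (C xs)).
Proof.
  intros PA PB PC. eapply prf_ext. apply (P_recL n A B (fun l => C (skipn 2 l))); auto.
  apply (P_shift n 2 C PC).
  intros xs _. unfold natrec, ifz. destruct (A xs); simpl; auto.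
Qed.

Lemma P_eqb n A B : prf n A -> prf n B -> prf n (fun xs => if A xs =? B xs then 1 else 0).
Proof.
  intros PA PB. eapply prf_ext.
  apply (P_ifz n (fun xs => (A xs - B xs) + (B xs - A xs)) (fun _ => 1) (fun _ => 0)).
  apply P_add; apply P_sub; auto. apply P_cst. apply P_cst.
  intros xs _. unfold ifz. destruct (A xs =? B xs) eqn:E.
  apply Nat.eqb_eq in E. rewrite E, Nat.sub_diag. reflexivity.
  apply Nat.eqb_neq in E. destruct (A xs - B xs + (B xs - A xs)) eqn:E2; auto. lia.
Qed.

Definition bsum (b : nat) (g : nat -> nat) : nat := natrec 0 (fun j r => r + g j) b.

Lemma P_bsum n G Bd : prf (S n) G -> prf n Bd -> prf n (fun xs => bsum (Bd xs) (fun j => G (j :: xs))).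
Proof.
  intros PG PB. eapply prf_ext.
  apply (P_recL n Bd (fun _ => 0) (fun l => nth 1 l 0 + G (hd 0 l :: skipn 2 l))); auto.
  apply P_cst. apply P_add. apply P_var. apply P_drop2nd, PG.
  intros; reflexivity.
Qed.

Lemma P_prodl n Gs : Forall (prf n) Gs -> prf n (fun xs => fold_right Nat.mul 1 (map (fun G => G xs) Gs)).
Proof.
  induction 1; simpl. apply P_cst. apply (P_mul n x (fun xs => fold_right Nat.mul 1 (map (fun G => G xs) l))); auto.
Qed.


Definition optlist (os : list (option nat)) : option (list nat) :=
  fold_right (fun o acc => match o, acc with Some y, Some ys => Some (y::ys) | _, _ => None end) (Some []) os.

Definition code (o : option nat) : nat := match o with None => 0 | Some y => S y end.

Definition mustep (F : nat -> option nat) (j s : nat) : nat :=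
  if s =? 0 then match F j with None => 1 | Some 0 => S (S j) | Some (S _) => 0 end else s.

Definition mures (s : nat) : option nat := match s with S (S y) => Some y | _ => None end.

Definition mustate (F : nat -> option nat) (j : nat) : nat := nat_rect (fun _ => nat) 0 (mustep F) j.

Fixpoint ev (k : nat) (f : recf) (xs : list nat) {struct f} : option nat :=
  match f with
  | RZero => Some 0
  | RSucc => match xs with x :: _ => Some (S x) | [] => None end
  | RProj i => if i <? length xs then Some (nth i xs 0) else None
  | RComp g gs => match optlist (map (fun h => ev k h xs) gs) with Some ys => ev k g ys | None => None end
  | RPrim g h => match xs with [] => None | m :: xs' =>
      nat_rect (fun _ => option nat) (ev k g xs')
        (fun m' o => match o with Some r => ev k h (m' :: r :: xs') | None => None end) m end
  | RMu g => mures (mustate (fun y => ev k g (y :: xs)) k)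
  end.

Fixpoint recf_ind2 (P : recf -> Prop) (HZ : P RZero) (HS : P RSucc) (HP : forall i, P (RProj i))
  (HC : forall g gs, P g -> Forall P gs -> P (RComp g gs))
  (HR : forall g h, P g -> P h -> P (RPrim g h))
  (HM : forall g, P g -> P (RMu g)) (f : recf) {struct f} : P f :=
  match f with
  | RZero => HZ | RSucc => HS | RProj i => HP i
  | RComp g gs => HC g gs (recf_ind2 P HZ HS HP HC HR HM g)
      ((fix go (l : list recf) : Forall P l := match l with [] => Forall_nil _
          | x :: t => Forall_cons _ (recf_ind2 P HZ HS HP HC HR HM x) (go t) end) gs)
  | RPrim g h => HR g h (recf_ind2 P HZ HS HP HC HR HM g) (recf_ind2 P HZ HS HP HC HR HM h)
  | RMu g => HM g (recf_ind2 P HZ HS HP HC HR HM g)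
  end.

Lemma mustate_sound F : forall j,
  (mustate F j = 0 -> forall z, z < j -> exists v, F z = Some (S v)) /\
  (forall y, mustate F j = S (S y) -> F y = Some 0 /\ forall z, z < y -> exists v, F z = Some (S v)).
Proof.
  induction j as [|j [IH1 IH2]].
  - split. intros _ z hz; lia. intros y H; discriminate.
  - unfold mustate in *. simpl. unfold mustep at 1 3.
    destruct (nat_rect (fun _ => nat) 0 (mustep F) j) as [|s] eqn:Es; simpl.
    + destruct (F j) as [[|v]|] eqn:Ej; split; try discriminate.
      * intros y Hy. injection Hy as <-. split; auto.
      * intros _ z hz. destruct (Nat.eq_dec z j) as [->|]. eauto. apply IH1; auto; lia.
    + split. discriminate. intros y Hy. apply IH2. exact Hy.
Qed.

Lemma mustate_complete F y : F y = Some 0 -> (forall z, z < y -> exists v, F z = Some (S v)) ->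
  forall j, (j <= y -> mustate F j = 0) /\ (y < j -> mustate F j = S (S y)).
Proof.
  intros Hy Hz. induction j as [|j [IH1 IH2]].
  - split; auto. lia.
  - unfold mustate in *. simpl. split.
    + intros hj. rewrite IH1 by lia. unfold mustep. simpl. destruct (Hz j) as [v ->]. lia. auto.
    + intros hj. destruct (Nat.eq_dec j y) as [->|].
      * rewrite IH1 by lia. unfold mustep. simpl. rewrite Hy. auto.
      * rewrite IH2 by lia. reflexivity.
Qed.

Lemma ev_sound : forall f k xs y, ev k f xs = Some y -> eval f xs y.
Proof.
  intros f. induction f as [| |i|g gs IHg IHgs|g h IHg IHh|g IHg] using recf_ind2;
    intros k xs y Hev; simpl in Hev.
  - injection Hev as <-. constructor.
  - destruct xs; try discriminate. injection Hev as <-. constructor.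
  - destruct (i <? length xs) eqn:E; try discriminate. injection Hev as <-. constructor.
    apply Nat.ltb_lt; auto.
  - destruct (optlist (map (fun h => ev k h xs) gs)) as [ys|] eqn:E; try discriminate.
    econstructor; [|eauto]. clear Hev IHg. revert ys E. induction IHgs as [|x l Hx Hl IHl]; intros ys E; simpl in E.
    + injection E as <-. constructor.
    + destruct (ev k x xs) eqn:E1; try discriminate.
      destruct (optlist (map (fun h => ev k h xs) l)) eqn:E2; try discriminate.
      injection E as <-. constructor; eauto.
  - destruct xs as [|m xs]; try discriminate. revert y Hev. induction m; simpl; intros y Hev.
    + constructor. eauto.
    + destruct (nat_rect _ _ _ m) eqn:E; try discriminate. econstructor; eauto.
  - unfold mures in Hev. destruct (mustate (fun y0 => ev k g (y0 :: xs)) k) as [|[|s]] eqn:E; try discriminate.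
    injection Hev as <-. destruct (mustate_sound (fun y0 => ev k g (y0 :: xs)) k) as [_ H2].
    destruct (H2 _ E) as [Hy Hz]. constructor. eauto.
    intros z hz. destruct (Hz z hz) as [v Hv]. eauto.
Qed.

Lemma collect (P : nat -> nat -> Prop) : forall y, (forall z, z < y -> exists K, forall k, K <= k -> P z k) ->
  exists K, forall z, z < y -> forall k, K <= k -> P z k.
Proof.
  induction y; intros H. exists 0; intros; lia.
  destruct IHy as [K1 H1]. intros; apply H; lia.
  destruct (H y) as [K2 H2]. lia.
  exists (K1 + K2). intros z hz k hk. destruct (Nat.eq_dec z y) as [->|]. apply H2; lia. apply H1; lia.
Qed.

Fixpoint ev_complete f xs y (H : eval f xs y) {struct H} : exists K, forall k, K <= k -> ev k f xs = Some y
with evs_complete gs xs ys (H : evals gs xs ys) {struct H} :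
  exists K, forall k, K <= k -> optlist (map (fun h => ev k h xs) gs) = Some ys.
Proof.
  - destruct H.
    + exists 0; reflexivity.
    + exists 0; reflexivity.
    + exists 0; intros; simpl. apply Nat.ltb_lt in H. rewrite H. reflexivity.
    + destruct (evs_complete _ _ _ H) as [K1 H1]. destruct (ev_complete _ _ _ H0) as [K2 H2].
      exists (K1 + K2). intros k hk. simpl. rewrite H1 by lia. apply H2; lia.
    + destruct (ev_complete _ _ _ H) as [K1 H1]. exists K1. intros k hk. simpl. auto.
    + destruct (ev_complete _ _ _ H) as [K1 H1]. destruct (ev_complete _ _ _ H0) as [K2 H2].
      exists (K1 + K2). intros k hk. simpl. specialize (H1 k ltac:(lia)). simpl in H1. rewrite H1. apply H2; lia.
    + destruct (ev_complete _ _ _ H) as [K1 H1].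
      assert (forall z, z < y -> exists v, exists K, forall k, K <= k -> ev k f (z :: xs) = Some (S v)) as Hz.
      { intros z hz. destruct (H0 z hz) as [v Hv]. exists v. exact (ev_complete _ _ _ Hv). }
      clear H0.
      assert (forall z, z < y -> exists K, forall k, K <= k -> exists v, ev k f (z :: xs) = Some (S v)) as Hz'.
      { intros z hz. destruct (Hz z hz) as [v [K HK]]. exists K. intros. exists v. auto. }
      destruct (collect _ y Hz') as [K2 H2].
      exists (K1 + K2 + S y). intros k hk. simpl.
      destruct (mustate_complete (fun y0 => ev k f (y0 :: xs)) y) with (j := k) as [_ E].
      apply H1; lia. intros z hz. apply (H2 z hz k). lia.
      rewrite E by lia. reflexivity.
  - destruct H.
    + exists 0; reflexivity.
    + destruct (ev_complete _ _ _ H) as [K1 H1]. destruct (evs_complete _ _ _ H0) as [K2 H2].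
      exists (K1 + K2). intros k hk. simpl. rewrite H1 by lia. rewrite H2 by lia. reflexivity.
Qed.

Lemma eval_det f xs y1 y2 : eval f xs y1 -> eval f xs y2 -> y1 = y2.
Proof.
  intros H1 H2. destruct (ev_complete _ _ _ H1) as [K1 E1]. destruct (ev_complete _ _ _ H2) as [K2 E2].
  specialize (E1 (K1 + K2) ltac:(lia)). specialize (E2 (K1 + K2) ltac:(lia)). congruence.
Qed.


Lemma P_pre k j F Gs : prf (length Gs + j) F -> Forall (prf (k + j)) Gs ->
  prf (k + j) (fun l => F (map (fun G => G l) Gs ++ skipn k l)).
Proof.
  intros PF PG. eapply prf_ext. apply (P_comp _ (k + j) F (Gs ++ map (fun i l => nth i l 0) (seq k j)) PF).
  apply Forall_app; split; auto. apply Forall_vars.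
  rewrite length_app, length_map, length_seq; auto.
  intros xs L. cbv beta. rewrite map_app, map_vars, skipn_vars by lia. reflexivity.
Qed.

Lemma optlist_code : forall os,
  (optlist os = None /\ fold_right Nat.mul 1 (map code os) = 0) \/
  (optlist os = Some (map (fun o => pred (code o)) os) /\ fold_right Nat.mul 1 (map code os) <> 0).
Proof.
  induction os as [|o os IH]; simpl. right; split; auto.
  destruct o as [y|]; simpl.
  - destruct IH as [[-> ->]|[-> H]]. left; split; auto; lia. right; split; auto. lia.
  - left. destruct (optlist os); auto.
Qed.

Definition clk (f : recf) (l : list nat) : nat := code (ev (hd 0 l) f (tl l)).

Lemma clk_prf : forall f n, prf (S n) (clk f).
Proof.
  intros f. induction f as [| |i|g gs IHg IHgs|g h IHg IHh|g IHg] using recf_ind2; intros n.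
  - eapply prf_ext. apply (P_cst _ 1). intros. reflexivity.
  - destruct n as [|n].
    + eapply prf_ext. apply (P_cst _ 0). intros [|k [|x xs]] L; simpl in L; try discriminate. reflexivity.
    + eapply prf_ext. apply P_S, P_S, (P_var _ 1). intros [|k [|x xs]] L; simpl in L; try discriminate. reflexivity.
  - destruct (Nat.lt_ge_cases i n) as [hi|hi].
    + eapply prf_ext. apply P_S, (P_var _ (S i)). intros [|k xs] L; simpl in L; try discriminate.
      unfold clk; simpl. injection L as L. replace (i <? length xs) with true. reflexivity.
      symmetry; apply Nat.ltb_lt; lia.
    + eapply prf_ext. apply (P_cst _ 0). intros [|k xs] L; simpl in L; try discriminate.
      unfold clk; simpl. injection L as L. replace (i <? length xs) with false. reflexivity.
      symmetry; apply Nat.ltb_ge; lia.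
  - set (Cs := map clk gs).
    assert (FC : Forall (prf (S n)) Cs).
    { unfold Cs. apply Forall_map. eapply Forall_impl; [|exact IHgs]. intros a Ha; apply Ha. }
    eapply prf_ext.
    apply (P_ifz _ (fun l => fold_right Nat.mul 1 (map (fun G => G l) Cs)) (fun _ => 0)
      (fun l => clk g (map (fun G => G l) ((fun l => nth 0 l 0) :: map (fun C l => pred (C l)) Cs)))).
    apply P_prodl; auto. apply P_cst.
    apply P_comp with (m := S (length gs)). apply IHg. constructor. apply P_var.
    apply Forall_map. eapply Forall_impl; [|exact FC]. intros a Ha. apply P_pred, Ha.
    simpl; unfold Cs; rewrite !length_map; auto.
    intros [|k xs] L; simpl in L; try discriminate.
    unfold Cs. rewrite !map_map. unfold clk at 1 3. simpl.
    destruct (optlist_code (map (fun h => ev k h xs) gs)) as [[E1 E2]|[E1 E2]].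
    + rewrite map_map in E2. unfold clk. simpl. rewrite E2, E1. reflexivity.
    + rewrite map_map in E2, E1. unfold clk in *. simpl in *. rewrite E1.
      destruct (fold_right Nat.mul 1 (map (fun x => code (ev k x xs)) gs)) eqn:E3. congruence.
      simpl. rewrite map_map. reflexivity.
  - destruct n as [|n].
    + eapply prf_ext. apply (P_cst _ 0). intros [|k [|x xs]] L; simpl in L; try discriminate.
      reflexivity.
    + assert (PB : prf (2 + n) (fun l => clk g (map (fun G => G l) [fun l => nth 0 l 0] ++ skipn 2 l))).
      { apply P_pre. apply IHg. repeat constructor. apply P_var. }
      assert (PG : prf (4 + n) (fun l => ifz (nth 1 l 0) 0
           (clk h (map (fun G => G l) [fun l => nth 2 l 0; fun l => nth 0 l 0; fun l => pred (nth 1 l 0)]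
               ++ skipn 4 l)))).
      { apply P_ifz. apply P_var. apply P_cst. apply P_pre. apply IHh.
        repeat constructor; try apply P_var. apply P_pred, P_var. }
      eapply prf_ext. apply (P_recL _ (fun l => nth 1 l 0) _ _ (P_var _ 1) PB PG).
      intros [|k [|m xs]] L; simpl in L; try discriminate.
      unfold clk, natrec. simpl. induction m as [|m IH]; simpl. reflexivity.
      rewrite IH. destruct (nat_rect (fun _ => option nat) _ _ m); reflexivity.
  - assert (PG : prf (3 + n) (fun l => ifz (nth 1 l 0)
        (ifz (clk g (map (fun G => G l) [fun l => nth 2 l 0; fun l => nth 0 l 0] ++ skipn 3 l)) 1
          (ifz (pred (clk g (map (fun G => G l) [fun l => nth 2 l 0; fun l => nth 0 l 0] ++ skipn 3 l)))
             (S (S (nth 0 l 0))) 0))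
        (nth 1 l 0))).
    { assert (PC : prf (3 + n) (fun l => clk g (map (fun G => G l) [fun l => nth 2 l 0; fun l => nth 0 l 0] ++ skipn 3 l))).
      { apply P_pre. apply IHg. repeat constructor; apply P_var. }
      apply P_ifz. apply P_var. apply P_ifz. exact PC. apply P_cst.
      apply P_ifz. apply P_pred, PC. apply P_S, P_S, P_var. apply P_cst. apply P_var. }
    eapply prf_ext. apply P_pred. apply (P_recL _ (fun l => nth 0 l 0) (fun _ => 0) _ (P_var _ 0) (P_cst _ 0) PG).
    intros [|k xs] L; simpl in L; try discriminate.
    cbv beta. simpl. unfold mustate, natrec.
    assert (E : forall j, nat_rect (fun _ : nat => nat) 0
       (fun m r : nat => ifz r (ifz (clk g (k :: m :: xs)) 1
             (ifz (Init.Nat.pred (clk g (k :: m :: xs))) (S (S m)) 0)) r) j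
       = nat_rect (fun _ => nat) 0 (mustep (fun y => ev k g (y :: xs))) j).
    { induction j as [|j IH]; simpl. reflexivity. rewrite IH.
      remember (nat_rect (fun _ => nat) 0 (mustep (fun y => ev k g (y :: xs))) j) as s.
      unfold mustep, clk. simpl.
      destruct s; simpl; auto. destruct (ev k g (j :: xs)) as [[|]|]; reflexivity. }
    rewrite E. unfold clk. simpl. unfold mures, mustate. destruct (nat_rect _ _ _ k) as [|[|]]; reflexivity.
Qed.


Definition sig1 (n : nat) (P : list nat -> Prop) : Prop :=
  exists H, prf (S n) H /\ forall xs, length xs = n -> (P xs <-> exists k, H (k :: xs) <> 0).

Lemma S_ext n P Q : sig1 n P -> (forall xs, length xs = n -> (P xs <-> Q xs)) -> sig1 n Q.
Proof. intros [H [PH E]] E2. exists H. split; auto. intros xs L. rewrite <- E2 by auto. auto. Qed.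

Lemma bsum_pos b g : bsum b g <> 0 <-> exists j, j < b /\ g j <> 0.
Proof.
  unfold bsum, natrec. induction b as [|b IH]; simpl.
  - split. intros H; lia. intros [j [hj _]]; lia.
  - rewrite Nat.add_comm. split.
    + intros H. destruct (g b) eqn:E. simpl in H. apply IH in H. destruct H as [j [hj H]]. exists j; split; auto.
      exists b; split; auto. lia.
    + intros [j [hj H]]. destruct (Nat.eq_dec j b) as [->|]. lia.
      assert (nat_rect (fun _ => nat) 0 (fun j r => r + g j) b <> 0). apply IH. exists j; split; auto; lia. lia.
Qed.

Lemma P_bex n H : prf (S n) H -> prf (S n) (fun l => bsum (S (hd 0 l)) (fun a => H (a :: tl l))).
Proof.
  intros PH. eapply prf_ext. apply (P_bsum (S n) (fun l => H (hd 0 l :: skipn 2 l)) (fun l => S (nth 0 l 0))).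
  apply P_drop2nd, PH. apply P_S, P_var.
  intros [|k xs] L; reflexivity.
Qed.

Lemma S_dec n D : prf n D -> sig1 n (fun xs => D xs <> 0).
Proof.
  intros PD. exists (fun l => D (skipn 1 l)). split. apply (P_shift n 1 D PD).
  intros xs L. simpl. split. intros H; exists 0; auto. intros [_ H]; auto.
Qed.

Lemma S_and n P Q : sig1 n P -> sig1 n Q -> sig1 n (fun xs => P xs /\ Q xs).
Proof.
  intros [H1 [P1 E1]] [H2 [P2 E2]].
  exists (fun l => bsum (S (hd 0 l)) (fun a => H1 (a :: tl l)) * bsum (S (hd 0 l)) (fun a => H2 (a :: tl l))).
  split. apply P_mul; apply P_bex; auto.
  intros xs L. rewrite E1, E2 by auto. split.
  - intros [[k1 K1] [k2 K2]]. exists (k1 + k2). cbv beta; cbn [hd tl].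
    assert (bsum (S (k1 + k2)) (fun a => H1 (a :: xs)) <> 0) by (apply bsum_pos; exists k1; split; auto; lia).
    assert (bsum (S (k1 + k2)) (fun a => H2 (a :: xs)) <> 0) by (apply bsum_pos; exists k2; split; auto; lia).
    nia.
  - intros [k K]. cbv beta in K; cbn [hd tl] in K.
    assert (bsum (S k) (fun a => H1 (a :: xs)) <> 0) as A1 by (intros E; rewrite E in K; lia).
    assert (bsum (S k) (fun a => H2 (a :: xs)) <> 0) as A2 by (intros E; rewrite E in K; lia).
    apply bsum_pos in A1, A2. destruct A1 as [j1 [_ J1]]. destruct A2 as [j2 [_ J2]]. eauto.
Qed.

Lemma S_or n P Q : sig1 n P -> sig1 n Q -> sig1 n (fun xs => P xs \/ Q xs).
Proof.
  intros [H1 [P1 E1]] [H2 [P2 E2]].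
  exists (fun l => H1 l + H2 l). split. apply P_add; auto.
  intros xs L. rewrite E1, E2 by auto. split.
  - intros [[k K]|[k K]]; exists k; lia.
  - intros [k K]. destruct (H1 (k :: xs)) eqn:E. right; exists k; lia. left; exists k; lia.
Qed.

Lemma S_ex n P : sig1 (S n) P -> sig1 n (fun xs => exists m, P (m :: xs)).
Proof.
  intros [H [PH E]].
  assert (PI : prf (S (S n)) (fun l => bsum (S (nth 1 l 0)) (fun k => H (k :: nth 0 l 0 :: skipn 2 l)))).
  { eapply prf_ext. apply (P_bsum (S (S n)) (fun l => H (map (fun G => G l) [fun l => nth 0 l 0; fun l => nth 1 l 0] ++ skipn 3 l))
       (fun l => S (nth 1 l 0))).
    apply (P_pre 3 n). exact PH. repeat constructor; apply P_var. apply P_S, P_var.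
    intros [|m [|w xs]] L; reflexivity. }
  exists (fun l => bsum (S (hd 0 l)) (fun m => bsum (S (hd 0 l)) (fun k => H (k :: m :: tl l)))).
  split.
  - eapply prf_ext. apply (P_bsum (S n) _ (fun l => S (nth 0 l 0)) PI). apply P_S, P_var.
    intros [|w xs] L; reflexivity.
  - intros xs L. split.
    + intros [m Hm]. apply E in Hm; [|simpl; auto]. destruct Hm as [k K]. exists (m + k). cbv beta; cbn [hd tl].
      apply bsum_pos. exists m. split. lia. apply bsum_pos. exists k. split; auto; lia.
    + intros [w W]. cbv beta in W; cbn [hd tl] in W. apply bsum_pos in W. destruct W as [m [_ W]]. apply bsum_pos in W.
      destruct W as [k [_ W]]. exists m. apply E. simpl; auto. eauto.
Qed.

Lemma bound_ex (Q : nat -> nat -> Prop) : forall b, (forall i, i < b -> exists k, Q i k) ->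
  exists w, forall i, i < b -> exists k, k <= w /\ Q i k.
Proof.
  induction b; intros H. exists 0; intros; lia.
  destruct IHb as [w1 W1]. intros; apply H; lia. destruct (H b) as [k Hk]. lia.
  exists (w1 + k). intros i hi. destruct (Nat.eq_dec i b) as [->|].
  exists k; split; auto; lia. destruct (W1 i) as [k' [? ?]]. lia. exists k'; split; auto; lia.
Qed.

Lemma S_ball n P Bd : sig1 (S n) P -> prf n Bd -> sig1 n (fun xs => forall i, i < Bd xs -> P (i :: xs)).
Proof.
  intros [H [PH E]] PB.
  assert (PI : prf (S (S n)) (fun l => ifz (bsum (S (nth 1 l 0)) (fun k => H (k :: nth 0 l 0 :: skipn 2 l))) 1 0)).
  { apply P_ifz. eapply prf_ext. apply (P_bsum (S (S n)) (fun l => H (map (fun G => G l) [fun l => nth 0 l 0; fun l => nth 1 l 0] ++ skipn 3 l))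
       (fun l => S (nth 1 l 0))).
    apply (P_pre 3 n). exact PH. repeat constructor; apply P_var. apply P_S, P_var.
    intros [|m [|w xs]] L; reflexivity. apply P_cst. apply P_cst. }
  exists (fun l => ifz (bsum (Bd (tl l)) (fun i => ifz (bsum (S (hd 0 l)) (fun k => H (k :: i :: tl l))) 1 0)) 1 0).
  split.
  - apply P_ifz. eapply prf_ext. apply (P_bsum (S n) _ (fun l => Bd (skipn 1 l)) PI). apply (P_shift n 1 Bd PB).
    intros [|w xs] L; reflexivity. apply P_cst. apply P_cst.
  - intros xs L. split.
    + intros HA. destruct (bound_ex (fun i k => H (k :: i :: xs) <> 0) (Bd xs)) as [w W].
      { intros i hi. apply E. simpl; auto. auto. }
      exists w. cbv beta; cbn [hd tl]. destruct (bsum (Bd xs) _) eqn:ES. simpl; lia. exfalso.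
      assert (bsum (Bd xs) (fun i => ifz (bsum (S w) (fun k => H (k :: i :: xs))) 1 0) <> 0) as NZ by lia.
      apply bsum_pos in NZ. destruct NZ as [i [hi NZ]]. destruct (W i hi) as [k [hk K]].
      assert (bsum (S w) (fun k => H (k :: i :: xs)) <> 0) as B by (apply bsum_pos; exists k; split; auto; lia).
      destruct (bsum (S w) _); simpl in NZ; auto.
    + intros [w W] i hi. cbv beta in W; cbn [hd tl] in W. apply E. simpl; auto.
      destruct (bsum (Bd xs) _) eqn:ES; [|simpl in W; lia].
      destruct (bsum (S w) (fun k => H (k :: i :: xs))) eqn:EB.
      * exfalso. assert (bsum (Bd xs) (fun i => ifz (bsum (S w) (fun k => H (k :: i :: xs))) 1 0) <> 0) as NZ.
        { apply bsum_pos. exists i. split; auto. rewrite EB. simpl; lia. }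
        lia.
      * assert (bsum (S w) (fun k => H (k :: i :: xs)) <> 0) as NZ by lia. apply bsum_pos in NZ.
        destruct NZ as [k [_ K]]; eauto.
Qed.

Lemma S_sub m n P Gs : sig1 m P -> Forall (prf n) Gs -> length Gs = m ->
  sig1 n (fun xs => P (map (fun G => G xs) Gs)).
Proof.
  intros [H [PH E]] PG LG.
  exists (fun l => H (map (fun G => G l) ((fun l => nth 0 l 0) :: map (fun G l => G (skipn 1 l)) Gs))).
  split.
  - apply (P_comp (S m)). exact PH. constructor. apply P_var. apply Forall_map.
    eapply Forall_impl; [|exact PG]. intros a Ha. apply (P_shift n 1 a Ha).
    simpl. rewrite length_map; auto.
  - intros xs L. rewrite E by (rewrite length_map; auto). simpl.
    split; intros [k K]; exists k; rewrite map_map in *; simpl in *; auto.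
Qed.

Lemma S_ce W : ce W -> sig1 1 (fun l => W (hd 0 l)).
Proof.
  intros [f Hf]. exists (clk f). split. apply clk_prf.
  intros [|x []] L; simpl in L; try discriminate. simpl. rewrite Hf. unfold clk. simpl. split.
  - intros [y Hy]. destruct (ev_complete _ _ _ Hy) as [K HK]. exists K. rewrite HK by lia. simpl; lia.
  - intros [k K]. destruct (ev k f [x]) eqn:E. exists n. eapply ev_sound; eauto. simpl in K; lia.
Qed.

Lemma least_ex (P : nat -> Prop) : (exists n, P n) ->
  exists n, P n /\ forall z, z < n -> ~ P z.
Proof.
  intros [n Hn]. induction n as [n IH] using (well_founded_induction lt_wf).
  destruct (classic (exists z, z < n /\ P z)) as [[z [hz Pz]]|NE].
  - apply (IH z hz Pz).
  - exists n. split; auto. intros z hz Pz. apply NE; eauto.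
Qed.

Lemma ce_S W : sig1 1 (fun l => W (hd 0 l)) -> ce W.
Proof.
  intros [H [PH E]].
  assert (PT : prf 2 (fun l => ifz (H l) 1 0)) by (apply P_ifz; auto; apply P_cst).
  destruct PT as [t Ht]. exists (RMu t). intros x. rewrite (E [x] eq_refl). split.
  - intros HK. destruct (least_ex (fun k => H [k; x] <> 0) HK) as [k [K Kmin]].
    exists k. constructor.
    + specialize (Ht [k; x] eq_refl). simpl in Ht. destruct (H [k; x]); [lia|exact Ht].
    + intros z hz. exists 0. specialize (Ht [z; x] eq_refl). simpl in Ht.
      destruct (H [z; x]) eqn:EZ; auto. exfalso; apply (Kmin z hz). lia.
  - intros [y Hy]. inversion Hy; subst. exists y.
    specialize (Ht [y; x] eq_refl). pose proof (eval_det _ _ _ _ H1 Ht) as D.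
    destruct (H [y; x]); simpl in D; lia.
Qed.

Definition od (m : nat) : nat := natrec 0 (fun _ r => ifz r 1 0) m.
Definition dv2 (m : nat) : nat := natrec 0 (fun j r => r + od j) m.
Definition itd (i u : nat) : nat := natrec u (fun _ r => dv2 r) i.
Definition tri (s : nat) : nat := natrec 0 (fun m r => r + S m) s.

Lemma od_spec m : od m = if Nat.odd m then 1 else 0.
Proof.
  unfold od, natrec. induction m; simpl. reflexivity. rewrite IHm. rewrite Nat.odd_succ, <- Nat.negb_odd.
  destruct (Nat.odd m); reflexivity.
Qed.

Lemma dv2_spec m : dv2 m = Nat.div2 m.
Proof.
  induction m. reflexivity.
  transitivity (dv2 m + od m). reflexivity. rewrite IHm, od_spec.
  pose proof (Nat.div2_odd m) as E1. pose proof (Nat.div2_odd (S m)) as E2.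
  rewrite Nat.odd_succ, <- Nat.negb_odd in E2.
  destruct (Nat.odd m); simpl in *; lia.
Qed.

Lemma itd_S i u : itd (S i) u = itd i (Nat.div2 u).
Proof.
  unfold itd, natrec. revert u. induction i; intros u; simpl.
  rewrite dv2_spec; reflexivity. simpl in IHi. rewrite IHi. reflexivity.
Qed.

Lemma tb_spec u i : Nat.testbit u i = Nat.odd (itd i u).
Proof.
  revert u. induction i; intros u. reflexivity.
  rewrite itd_S. simpl. apply IHi.
Qed.

Lemma tri_spec s : tri s * 2 = s * (s + 1).
Proof. unfold tri, natrec. induction s; simpl in *; lia. Qed.

Lemma pair_tri a b : pair a b = tri (a + b) + b.
Proof.
  unfold pair. f_equal. rewrite <- tri_spec. apply Nat.div_mul. lia.
Qed.

Lemma P_od n A : prf n A -> prf n (fun xs => od (A xs)).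
Proof.
  intros PA. apply (P_recL n A (fun _ => 0) (fun l => ifz (nth 1 l 0) 1 0)); auto. apply P_cst.
  apply P_ifz. apply P_var. apply P_cst. apply P_cst.
Qed.

Lemma P_dv2 n A : prf n A -> prf n (fun xs => dv2 (A xs)).
Proof.
  intros PA. apply (P_recL n A (fun _ => 0) (fun l => nth 1 l 0 + od (nth 0 l 0))); auto. apply P_cst.
  apply P_add. apply P_var. apply P_od, P_var.
Qed.

Lemma P_tb n U I : prf n U -> prf n I -> prf n (fun xs => od (itd (I xs) (U xs))).
Proof.
  intros PU PI. apply P_od. apply (P_recL n I U (fun l => dv2 (nth 1 l 0))); auto. apply P_dv2, P_var.
Qed.

Lemma P_pair n A B : prf n A -> prf n B -> prf n (fun xs => pair (A xs) (B xs)).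
Proof.
  intros PA PB. eapply prf_ext. apply P_add; [|exact PB].
  apply (P_recL n (fun xs => A xs + B xs) (fun _ => 0) (fun l => nth 1 l 0 + S (nth 0 l 0))).
  apply P_add; auto. apply P_cst. apply P_add. apply P_var. apply P_S, P_var.
  intros xs _. rewrite pair_tri. reflexivity.
Qed.

Inductive tm := TV (i : nat) | TC (c : nat) | TAdd (a b : tm) | TPair (a b : tm).

Fixpoint tden (t : tm) (env : list nat) : nat :=
  match t with
  | TV i => nth i env 0
  | TC c => c
  | TAdd a b => tden a env + tden b env
  | TPair a b => pair (tden a env) (tden b env)
  end.

Lemma tm_prf t n : prf n (tden t).
Proof.
  induction t; simpl. apply P_var. apply P_cst. apply P_add; auto. apply P_pair; auto.
Qed.

Inductive fm := FEq (a b : tm) | FBit (u i : tm) | FNBit (u i : tm) | FMem (W : nat -> Prop) (t : tm)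
  | FAnd (p q : fm) | FOr (p q : fm) | FEx (p : fm) | FBall (b : tm) (p : fm).

Fixpoint fden (p : fm) (env : list nat) : Prop :=
  match p with
  | FEq a b => tden a env = tden b env
  | FBit u i => Nat.testbit (tden u env) (tden i env) = true
  | FNBit u i => Nat.testbit (tden u env) (tden i env) = false
  | FMem W t => W (tden t env)
  | FAnd p q => fden p env /\ fden q env
  | FOr p q => fden p env \/ fden q env
  | FEx p => exists m, fden p (m :: env)
  | FBall b p => forall i, i < tden b env -> fden p (i :: env)
  end.

Fixpoint allce (p : fm) : Prop :=
  match p with
  | FMem W _ => ce W
  | FAnd p q | FOr p q => allce p /\ allce q
  | FEx p | FBall _ p => allce p
  | _ => True
  end.

Lemma fm_sig p : allce p -> forall n, sig1 n (fden p).
Proof.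
  induction p; simpl; intros HA n.
  - eapply S_ext. apply S_dec. apply (P_eqb _ (tden a) (tden b)); apply tm_prf.
    intros xs _. simpl. destruct (tden a xs =? tden b xs) eqn:E.
    + apply Nat.eqb_eq in E. split; intros; auto.
    + apply Nat.eqb_neq in E. split; intros; [lia|contradiction].
  - eapply S_ext. apply S_dec. apply (P_tb _ (tden u) (tden i)); apply tm_prf.
    intros xs _. simpl. rewrite tb_spec, od_spec. destruct (Nat.odd _); split; intros; auto; lia.
  - eapply S_ext. apply S_dec. apply (P_sub _ (fun _ => 1)). apply P_cst. apply (P_tb _ (tden u) (tden i)); apply tm_prf.
    intros xs _. simpl. rewrite tb_spec, od_spec. destruct (Nat.odd _); split; intros; auto; try lia; discriminate.
  - eapply S_ext. apply (S_sub 1 n (fun l => W (hd 0 l)) [tden t]). apply S_ce, HA. constructor. apply tm_prf. constructor. reflexivity.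
    intros xs _. reflexivity.
  - apply S_and; [apply IHp1|apply IHp2]; tauto.
  - apply S_or; [apply IHp1|apply IHp2]; tauto.
  - apply S_ex. apply IHp; auto.
  - apply S_ball. apply IHp; auto. apply tm_prf.
Qed.

Lemma fm_ce p : allce p -> ce (fun x => fden p [x]).
Proof.
  intros HA. apply ce_S. eapply S_ext. apply (fm_sig p HA 1).
  intros [|x []] L; simpl in L; try discriminate. reflexivity.
Qed.


Lemma tri_S s : tri (S s) = tri s + S s.
Proof. reflexivity. Qed.

Lemma tri_lt s s' : s < s' -> tri s + s < tri s'.
Proof.
  induction 1. rewrite tri_S. lia. rewrite tri_S. lia.
Qed.

Lemma pair_inj a b c d : pair a b = pair c d -> a = c /\ b = d.
Proof.
  rewrite !pair_tri. intros E.
  destruct (Nat.lt_trichotomy (a + b) (c + d)) as [h|[h|h]].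
  - pose proof (tri_lt _ _ h). lia.
  - rewrite h in E. lia.
  - pose proof (tri_lt _ _ h). lia.
Qed.

Lemma bit_lt u i : canfin u i -> i < u.
Proof.
  unfold canfin. intros H. destruct u. rewrite Nat.bits_0 in H; discriminate.
  destruct (Nat.le_gt_cases i (Nat.log2 (S u))) as [h|h].
  pose proof (Nat.log2_lt_lin (S u)). lia.
  rewrite Nat.bits_above_log2 in H by lia. discriminate.
Qed.

Lemma bit_dec u i : Nat.testbit u i = false \/ canfin u i.
Proof. unfold canfin. destruct (Nat.testbit u i); auto. Qed.

Lemma canfin_pow p i : canfin (2 ^ p) i <-> i = p.
Proof.
  unfold canfin. split. intros H. destruct (Nat.eq_dec p i) as [->|n]; auto.
  rewrite Nat.pow2_bits_false in H; auto; discriminate.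
  intros ->. apply Nat.pow2_bits_true.
Qed.

Lemma canfin_lor a b i : canfin (Nat.lor a b) i <-> canfin a i \/ canfin b i.
Proof. unfold canfin. rewrite Nat.lor_spec. destruct (Nat.testbit a i), (Nat.testbit b i); simpl; intuition. Qed.

Lemma fin_collect (Q : nat -> nat -> Prop) (P : nat -> Prop) u :
  (forall i, canfin u i -> exists v, Q i v /\ forall j, canfin v j -> P j) ->
  exists w, (forall j, canfin w j -> P j) /\ forall i, canfin u i -> exists v, Q i v /\ forall j, canfin v j -> canfin w j.
Proof.
  intros H.
  assert (G : forall b, exists w, (forall j, canfin w j -> P j) /\
     forall i, i < b -> canfin u i -> exists v, Q i v /\ forall j, canfin v j -> canfin w j).
  { induction b as [|b [w [W1 W2]]].
    - exists 0. split. intros j Hj. unfold canfin in Hj. rewrite Nat.bits_0 in Hj; discriminate. intros; lia.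
    - destruct (bit_dec u b) as [F|T].
      + exists w. split; auto. intros i hi Hi. destruct (Nat.eq_dec i b) as [->|]. unfold canfin in Hi; congruence.
        apply W2; auto; lia.
      + destruct (H b T) as [v [Qv Pv]]. exists (Nat.lor w v). split.
        * intros j Hj. apply canfin_lor in Hj. destruct Hj; auto.
        * intros i hi Hi. destruct (Nat.eq_dec i b) as [->|].
          exists v. split; auto. intros j Hj. apply canfin_lor; auto.
          destruct (W2 i ltac:(lia) Hi) as [v' [Q' P']]. exists v'. split; auto. intros j Hj; apply canfin_lor; auto. }
  destruct (G u) as [w [W1 W2]]. exists w. split; auto. intros i Hi. apply W2; auto. apply bit_lt; auto.
Qed.

Lemma ered_ext (A A' B : nat -> Prop) : (forall n, A n <-> A' n) -> ered A B -> ered A' B.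
Proof. intros E [G [HG HE]]. exists G. split; auto. intros n. rewrite <- E. auto. Qed.

Lemma enum_mono G (B B' : nat -> Prop) n : (forall x, B x -> B' x) -> enum_op G B n -> enum_op G B' n.
Proof. intros HB [u [H1 H2]]. exists u. split; auto. Qed.

Lemma ered_trans A B C : ered A B -> ered B C -> ered A C.
Proof.
  intros [G [HG EG]] [D [HD ED]].
  set (phi := FEx (FEx (FAnd (FEq (TV 2) (TPair (TV 1) (TV 0)))
        (FEx (FAnd (FMem G (TPair (TV 2) (TV 0)))
           (FBall (TV 0) (FOr (FNBit (TV 1) (TV 0))
              (FEx (FAnd (FMem D (TPair (TV 1) (TV 0)))
                 (FBall (TV 0) (FOr (FNBit (TV 1) (TV 0)) (FBit (TV 4) (TV 0))))))))))))).
  exists (fun x => fden phi [x]). split. apply fm_ce. simpl; tauto.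
  intros n. rewrite EG. split.
  - intros [u [Gu Bu]].
    destruct (fin_collect (fun i v => D (pair i v)) C u) as [w [Cw Hw]].
    { intros i Hi. apply Bu, ED in Hi. destruct Hi as [v [Dv Cv]]. eauto. }
    exists w. split; auto. simpl. exists n, w. split; auto. exists u. split; auto.
    intros i hi. destruct (bit_dec u i) as [F|T]; auto. right.
    destruct (Hw i T) as [v [Dv Vw]]. exists v. split; auto.
    intros j hj. destruct (bit_dec v j) as [F|T2]; auto. right; apply Vw; auto.
  - intros [w [Sw Cw]]. simpl in Sw. destruct Sw as [n' [w' [E [u [Gu Hu]]]]].
    apply pair_inj in E. destruct E as [<- <-].
    exists u. split; auto. intros i Hi. apply ED.
    destruct (Hu i (bit_lt _ _ Hi)) as [F|[v [Dv Hv]]]. unfold canfin in Hi; congruence.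
    exists v. split; auto. intros j Hj. apply Cw. destruct (Hv j (bit_lt _ _ Hj)) as [F|T]; auto.
    unfold canfin in Hj; congruence.
Qed.

Lemma join_even (P Q : nat -> Prop) n : join P Q (n + n) <-> P n.
Proof.
  unfold join. split.
  - intros [[k [E H]]|[k [E H]]]. replace n with k by lia. auto. lia.
  - intros H. left. exists n. split; auto; lia.
Qed.

Lemma join_odd (P Q : nat -> Prop) n : join P Q (n + n + 1) <-> Q n.
Proof.
  unfold join. split.
  - intros [[k [E H]]|[k [E H]]]. lia. replace n with k by lia. auto.
  - intros H. right. exists n. split; auto; lia.
Qed.

Lemma join_cases (P Q : nat -> Prop) m : join P Q m -> (exists n, m = n + n /\ P n) \/ (exists n, m = n + n + 1 /\ Q n).
Proof. unfold join. intros [[k [E H]]|[k [E H]]]; [left|right]; exists k; split; auto; lia. Qed.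

Lemma ered_join_l B C : ered B (join B C).
Proof.
  set (phi := FEx (FEx (FAnd (FEq (TV 2) (TPair (TV 1) (TV 0))) (FBit (TV 0) (TAdd (TV 1) (TV 1)))))).
  exists (fun x => fden phi [x]). split. apply fm_ce. simpl; tauto.
  intros n. split.
  - intros Bn. exists (2 ^ (n + n)). split. simpl. exists n, (2 ^ (n + n)). split; auto. apply canfin_pow; auto.
    intros i Hi. apply canfin_pow in Hi. subst. apply join_even; auto.
  - intros [u [Su Hu]]. simpl in Su. destruct Su as [n' [u' [E Bt]]]. apply pair_inj in E. destruct E as [<- <-].
    apply (join_even B C). apply Hu. exact Bt.
Qed.


Lemma key (U A B X : nat -> Prop) : KPair U A B -> ~ ered B U ->
  ered (join X (fun n => ~ X n)) A -> ered (join X (fun n => ~ X n)) U.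
Proof.
  intros [W [HWU [H1 H2]]] NB HZ.
  set (Zs := join X (fun n => ~ X n)) in *.
  destruct HZ as [G [HG EG]]. destruct HWU as [Th [HTh ETh]].
  set (R := fun y => exists m b, y = pair m b /\ enum_op G (fun a => W (pair a b)) m).
  assert (RE : forall m b, R (pair m b) <-> enum_op G (fun a => W (pair a b)) m).
  { intros m b. split. intros [m' [b' [E H]]]. apply pair_inj in E. destruct E as [-> ->]; auto.
    intros H. exists m, b. auto. }
  assert (RU : ered R U).
  { set (phi := FEx (FEx (FEx (FAnd (FEq (TV 3) (TPair (TPair (TV 2) (TV 1)) (TV 0)))
       (FEx (FAnd (FMem G (TPair (TV 3) (TV 0)))
         (FBall (TV 0) (FOr (FNBit (TV 1) (TV 0))
           (FEx (FAnd (FMem Th (TPair (TPair (TV 1) (TV 4)) (TV 0)))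
             (FBall (TV 0) (FOr (FNBit (TV 1) (TV 0)) (FBit (TV 4) (TV 0)))))))))))))).
    exists (fun x => fden phi [x]). split. apply fm_ce. simpl; tauto.
    intros y. split.
    - intros [m [b [-> [u [Gu Bu]]]]].
      destruct (fin_collect (fun i v => Th (pair (pair i b) v)) U u) as [w [Uw Hw]].
      { intros i Hi. apply Bu, ETh in Hi. destruct Hi as [v [Dv Cv]]. eauto. }
      exists w. split; auto. simpl. exists m, b, w. split; auto. exists u. split; auto.
      intros i hi. destruct (bit_dec u i) as [F|T]; auto. right.
      destruct (Hw i T) as [v [Dv Vw]]. exists v. split; auto.
      intros j hj. destruct (bit_dec v j) as [F|T2]; auto. right; apply Vw; auto.
    - intros [w [Sw Cw]]. simpl in Sw. destruct Sw as [m [b [w' [E [u [Gu Hu]]]]]].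
      apply pair_inj in E. destruct E as [-> <-]. apply RE.
      exists u. split; auto. intros i Hi. apply ETh.
      destruct (Hu i (bit_lt _ _ Hi)) as [F|[v [Dv Hv]]]. unfold canfin in Hi; congruence.
      exists v. split; auto. intros j Hj. apply Cw. destruct (Hv j (bit_lt _ _ Hj)) as [F|T]; auto.
      unfold canfin in Hj; congruence. }
  set (S := fun b => exists n, R (pair (n + n) b) /\ R (pair (n + n + 1) b)).
  assert (SR : ered S R).
  { set (phi := FEx (FEx (FAnd (FEq (TV 2) (TPair (TV 1) (TV 0)))
       (FEx (FAnd (FBit (TV 1) (TPair (TAdd (TV 0) (TV 0)) (TV 2)))
                  (FBit (TV 1) (TPair (TAdd (TAdd (TV 0) (TV 0)) (TC 1)) (TV 2)))))))).
    exists (fun x => fden phi [x]). split. apply fm_ce. simpl; tauto.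
    intros b. split.
    - intros [n [Ra Rb]]. exists (Nat.lor (2 ^ pair (n + n) b) (2 ^ pair (n + n + 1) b)). split.
      + simpl. exists b, (Nat.lor (2 ^ pair (n + n) b) (2 ^ pair (n + n + 1) b)). split; auto.
        exists n. split; apply canfin_lor; [left|right]; apply canfin_pow; auto.
      + intros i Hi. apply canfin_lor in Hi. destruct Hi as [Hi|Hi]; apply canfin_pow in Hi; subst; auto.
    - intros [u [Su Hu]]. simpl in Su. destruct Su as [b' [u' [E [n [B1 B2]]]]].
      apply pair_inj in E. destruct E as [<- <-]. exists n. split; apply Hu; auto. }
  assert (SU : ered S U) by (eapply ered_trans; eauto).
  assert (SB : forall b, S b -> B b).
  { intros b [n [Ra Rb]]. apply NNPP. intros NBb.
    assert (Sub : forall m, R (pair m b) -> Zs m).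
    { intros m Rm. apply RE in Rm. apply EG. eapply enum_mono; [|exact Rm].
      intros a Wa. apply NNPP. intros NA. exact (H2 a b NA NBb Wa). }
    apply Sub in Ra, Rb. apply join_even in Ra. apply join_odd in Rb. auto. }
  assert (Ex : exists b, B b /\ ~ S b).
  { apply NNPP. intros NE. apply NB. eapply ered_ext; [|exact SU].
    intros b. split; auto. intros Bb. apply NNPP. intros NS. apply NE. eauto. }
  destruct Ex as [b [Bb NSb]].
  assert (ZR : ered (fun m => R (pair m b)) R).
  { set (phi := FEx (FEx (FAnd (FEq (TV 2) (TPair (TV 1) (TV 0))) (FBit (TV 0) (TPair (TV 1) (TC b)))))).
    exists (fun x => fden phi [x]). split. apply fm_ce. simpl; tauto.
    intros m. split.
    - intros Rm. exists (2 ^ pair m b). split. simpl. exists m, (2 ^ pair m b). split; auto. apply canfin_pow; auto.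
      intros i Hi. apply canfin_pow in Hi. subst; auto.
    - intros [u [Su Hu]]. simpl in Su. destruct Su as [m' [u' [E Bt]]]. apply pair_inj in E. destruct E as [<- <-].
      apply Hu. exact Bt. }
  assert (Sup : forall m, Zs m -> R (pair m b)).
  { intros m Zm. apply RE. apply EG in Zm. eapply enum_mono; [|exact Zm]. intros a Aa. apply H1; auto. }
  eapply ered_ext; [|eapply ered_trans; [exact ZR|exact RU]].
  intros m. split; [|apply Sup].
  intros Rm. destruct (Nat.Even_or_Odd m) as [[n ->]|[n ->]].
  - replace (2 * n) with (n + n) in * by lia. apply join_even. apply NNPP. intros NX.
    apply NSb. exists n. split; auto. apply Sup. apply join_odd. auto.
  - replace (2 * n + 1) with (n + n + 1) in * by lia. apply join_odd. intros Xn.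
    apply NSb. exists n. split; auto. apply Sup. apply join_even. auto.
Qed.

Lemma kpair_join (T0 T1 A B C : nat -> Prop) : KPair T0 A B -> KPair T1 A C -> ered T1 T0 ->
  KPair T0 A (join B C).
Proof.
  intros [W0 [E0 [H01 H02]]] [W1 [E1 [H11 H12]]] T10.
  assert (E1' : ered W1 T0) by (eapply ered_trans; eauto).
  destruct E0 as [Th0 [HT0 ET0]]. destruct E1' as [Th1 [HT1 ET1]].
  set (W := fun y => exists a m, y = pair a m /\ exists n, (m = n + n /\ W0 (pair a n)) \/ (m = n + n + 1 /\ W1 (pair a n))).
  assert (WE : forall a m, W (pair a m) <-> exists n, (m = n + n /\ W0 (pair a n)) \/ (m = n + n + 1 /\ W1 (pair a n))).
  { intros a m. split. intros [a' [m' [E H]]]. apply pair_inj in E. destruct E as [-> ->]; auto.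
    intros H; exists a, m; auto. }
  exists W. split.
  - set (phi := FEx (FEx (FEx (FEx (FAnd (FEq (TV 4) (TPair (TPair (TV 3) (TV 2)) (TV 1)))
        (FOr (FAnd (FEq (TV 2) (TAdd (TV 0) (TV 0))) (FMem Th0 (TPair (TPair (TV 3) (TV 0)) (TV 1))))
             (FAnd (FEq (TV 2) (TAdd (TAdd (TV 0) (TV 0)) (TC 1))) (FMem Th1 (TPair (TPair (TV 3) (TV 0)) (TV 1)))))))))).
    exists (fun x => fden phi [x]). split. apply fm_ce. simpl; tauto.
    intros y. split.
    + intros [a [m [-> [n [[Em Wn]|[Em Wn]]]]]].
      * apply ET0 in Wn. destruct Wn as [w [Tw Uw]]. exists w. split; auto. simpl.
        exists a, m, w, n. split; auto.
      * apply ET1 in Wn. destruct Wn as [w [Tw Uw]]. exists w. split; auto. simpl.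
        exists a, m, w, n. split; auto.
    + intros [w [Sw Uw]]. simpl in Sw. destruct Sw as [a [m [w' [n [E Hn]]]]].
      apply pair_inj in E. destruct E as [-> <-]. apply WE. exists n.
      destruct Hn as [[Em Tn]|[Em Tn]]; [left|right]; split; auto; [apply ET0|apply ET1]; exists w; auto.
  - split.
    + intros a m Aa Jm. apply WE. apply join_cases in Jm. destruct Jm as [[n [-> Bn]]|[n [-> Cn]]]; exists n; auto.
    + intros a m NA NJ Wm. apply WE in Wm. destruct Wm as [n [[-> Wn]|[-> Wn]]].
      * apply (H02 a n NA); auto. intros Bn. apply NJ. apply join_even; auto.
      * apply (H12 a n NA); auto. intros Cn. apply NJ. apply join_odd; auto.
Qed.

Theorem lemma6p3 (T0 T1 A B C : nat -> Prop) :
  total_degree T0 -> total_degree T1 ->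
  elt T0 A -> elt T1 A ->
  nontrivial_KPair T0 A B -> nontrivial_KPair T1 A C ->
  eequiv T0 T1 /\ nontrivial_KPair T0 A (join B C).
Proof.
  intros [X0 [E0a E0b]] [X1 [E1a E1b]] [L0 _] [L1 _] [K0 [NA0 NB0]] [K1 [NA1 NC1]].
  assert (T10 : ered T1 T0).
  { eapply ered_trans; [exact E1a|]. apply (key T0 A B X1 K0 NB0). eapply ered_trans; eauto. }
  assert (T01 : ered T0 T1).
  { eapply ered_trans; [exact E0a|]. apply (key T1 A C X0 K1 NC1). eapply ered_trans; eauto. }
  split. split; auto.
  split. eapply kpair_join; eauto.
  split; auto. intros J. apply NB0. eapply ered_trans; [apply ered_join_l|exact J].
Qed.
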